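(* For every integer $n\ge 2$ there exist a finite alphabet $\Sigma_n$ and an $n$-state 1gQFA $Q_n$ over $\Sigma_n$ such that, taking strict cutpoint $1/2$, every one-way PFA $P$ over $\Sigma_n$ for which there is a strict cutpoint $\mu\in[0,1)$ with $L(P,\mu)=L(Q_n,1/2)$ has at least $n^2-1$ states.
   Context: Let $\Sigma$ be a finite alphabet and $\Sigma^\ast$ the set of finite words over it. Probabilistic computations are written with row vectors; stochastic matrices act on the right. A one-way PFA (probabilistic finite automaton, end-marker model) over $\Sigma$ is a tuple $P=(S,\Sigma,\pi,\{P_\sigma\}_{\sigma\in\Sigma},P_{\#},F)$, where $S$ is a finite state set (its number of states is $|S|$), $\pi$ is an initial probability distribution (row vector) on $S$, each $P_\sigma$ and $P_\#$ are row-stochastic $|S|\times|S|$ matrices, and $F\subseteq S$. For $w=\sigma_1\cdots\sigma_m$, $f_P(w)=\pi P_{\sigma_1}\cdots P_{\sigma_m}P_\#\mathbf 1_F$, where $\mathbf 1_F$ is the indicator column vector of $F$. For $\mu\in[0,1)$, $L(P,\mu)=\{w\in\Sigma^\ast: f_P(w)>\mu\}$. An $n$-state 1gQFA (measure-once one-way general quantum finite automaton) over $\Sigma$ is a tuple $Q=(\mathcal H,\Sigma,\rho_0,\{\mathcal E_\sigma\}_{\sigma\in\Sigma},P_{\mathrm{acc}})$ where $\mathcal H\cong\mathbb C^n$, $\rho_0$ is a density operator on $\mathcal H$, each $\mathcal E_\sigma$ is a completely positive trace-preserving map on the operators on $\mathcal H$, and $P_{\mathrm{acc}}$ is an orthogonal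 projector on $\mathcal H$. For $w=\sigma_1\cdots\sigma_m$, $\rho_w=\mathcal E_{\sigma_m}\circ\cdots\circ\mathcal E_{\sigma_1}(\rho_0)$ and $f_Q(w)=\operatorname{Tr}(P_{\mathrm{acc}}\rho_w)$. For $\lambda\in[0,1)$, $L(Q,\lambda)=\{w\in\Sigma^\ast: f_Q(w)>\lambda\}$. *)

(* Defs.v *)
From Stdlib Require Import Reals.
From HB Require Import structures.
From mathcomp Require Import all_boot all_order all_algebra.
From mathcomp Require Import complex.
From mathcomp Require Import Rstruct.
Set Implicit Arguments. Unset Strict Implicit. Unset Printing Implicit Defensive.
Import Order.TTheory GRing.Theory Num.Theory.
Local Open Scope ring_scope.

Notation C := (complex R).

Definition stochastic_row (k : nat) (v : 'rV[R]_k) : Prop :=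
  (forall j, 0 <= v 0 j) /\ \sum_j v 0 j = 1.

Definition row_stochastic (k : nat) (M : 'M[R]_k) : Prop :=
  (forall i j, 0 <= M i j) /\ (forall i, \sum_j M i j = 1).

Record PFA (S : finType) (k : nat) := MkPFA {
  pfa_init : 'rV[R]_k;
  pfa_trans : S -> 'M[R]_k;
  pfa_end : 'M[R]_k;
  pfa_final : {set 'I_k}
}.

Definition is_PFA (S : finType) (k : nat) (P : PFA S k) : Prop :=
  stochastic_row (pfa_init P) /\
  (forall s, row_stochastic (pfa_trans P s)) /\
  row_stochastic (pfa_end P).

Definition indicator_col (k : nat) (F : {set 'I_k}) : 'cV[R]_k :=
  \col_i (if i \in F then 1 else 0).

Definition pfa_prob (S : finType) (k : nat) (P : PFA S k) (w : seq S) : R :=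
  ((foldl (fun v s => v *m pfa_trans P s) (pfa_init P) w)
     *m pfa_end P *m indicator_col (pfa_final P)) 0 0.

Definition pfa_lang (S : finType) (k : nat) (P : PFA S k) (mu : R) : pred (seq S) :=
  fun w => mu < pfa_prob P w.

Definition adjmx (m n : nat) (A : 'M[C]_(m, n)) : 'M[C]_(n, m) :=
  (map_mx Num.conj A)^T.

Definition hermitian (n : nat) (A : 'M[C]_n) : Prop := adjmx A = A.

Definition psd (n : nat) (A : 'M[C]_n) : Prop :=
  hermitian A /\ forall v : 'cV[C]_n, 0 <= (adjmx v *m A *m v) 0 0.

Definition density (n : nat) (rho : 'M[C]_n) : Prop :=
  psd rho /\ \tr rho = 1.

Definition projector (n : nat) (P : 'M[C]_n) : Prop :=
  hermitian P /\ P *m P = P.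

Definition kraus_apply (n : nat) (Ks : seq 'M[C]_n) (rho : 'M[C]_n) : 'M[C]_n :=
  \sum_(K <- Ks) (K *m rho *m adjmx K).

(* By the Choi-Kraus theorem,
   the maps kraus_apply Ks with this property are exactly the completely
   positive trace-preserving maps on operators on C^n. *)
Definition kraus_TP (n : nat) (Ks : seq 'M[C]_n) : Prop :=
  \sum_(K <- Ks) (adjmx K *m K) = 1%:M.

Record QFA (S : finType) (n : nat) := MkQFA {
  qfa_init : 'M[C]_n;
  qfa_ops : S -> seq 'M[C]_n;
  qfa_acc : 'M[C]_n
}.

Definition is_1gQFA (S : finType) (n : nat) (Q : QFA S n) : Prop :=
  density (qfa_init Q) /\
  (forall s, kraus_TP (qfa_ops Q s)) /\
  projector (qfa_acc Q).

Definition qfa_state (S : finType) (n : nat) (Q : QFA S n) (w : seq S) : 'M[C]_n :=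
  foldl (fun rho s => kraus_apply (qfa_ops Q s) rho) (qfa_init Q) w.

Definition qfa_prob (S : finType) (n : nat) (Q : QFA S n) (w : seq S) : C :=
  \tr (qfa_acc Q *m qfa_state Q w).

Definition qfa_lang (S : finType) (n : nat) (Q : QFA S n) (lambda : C) : pred (seq S) :=
  fun w => lambda < qfa_prob Q w.

(* Main.v *)
Require Import Defs.
From Stdlib Require Import Reals.
From HB Require Import structures.
From mathcomp Require Import all_boot all_order all_algebra.
From mathcomp Require Import complex.
From mathcomp Require Import Rstruct.
From mathcomp Require Import ring lra.
Import Order.TTheory GRing.Theory Num.Theory.
Set Implicit Arguments. Unset Strict Implicit. Unset Printing Implicit Defensive.
Local Open Scope ring_scope.

Local Notation CC := (complex R).

Definition ev (n : nat) (a : 'I_n) : 'cV[CC]_n := delta_mx a 0.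
Definition iC : CC := Complex 0 1.
Lemma conj_iC : Num.conj iC = - iC.
Proof. by apply/eqP; rewrite eq_complex /= oppr0 !eqxx. Qed.
Lemma conj_miC : Num.conj (- iC) = iC.
Proof. by apply/eqP; rewrite eq_complex /= opprK oppr0 !eqxx. Qed.
Lemma iC2 : iC * iC = -1.
Proof. by apply/eqP; rewrite eq_complex /=; apply/andP; split; apply/eqP; ring. Qed.
Definition om (k : 'I_4) : CC := iC ^+ k.
Definition uv (n : nat) (i : 'I_n * 'I_n * 'I_4) : 'cV[CC]_n :=
  ev i.1.1 + om i.2 *: ev i.1.2.

Lemma conj_nat (b : bool) : Num.conj (b%:R : CC) = b%:R.
Proof. by case: b; rewrite ?conjC1 ?conjC0. Qed.

Lemma om_conj (k : 'I_4) : om k * Num.conj (om k) = 1.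
Proof.
case: k => [[|[|[|[|//]]]] ?]; rewrite /om /=.
- by rewrite expr0 conjC1 mulr1.
- by rewrite expr1 conj_iC mulrN iC2 opprK.
- by rewrite expr2 iC2 conjCN1 mulrNN mulr1.
- by rewrite exprS expr2 iC2 mulrN1 conj_miC mulNr iC2 opprK.
Qed.

Lemma sum_dl (n : nat) (a : 'I_n) (G : 'I_n -> CC) :
  \sum_p (a == p)%:R * G p = G a.
Proof.
rewrite (bigD1 a) //= eqxx mul1r big1 ?addr0 // => p /negbTE.
by rewrite eq_sym => ->; rewrite mul0r.
Qed.

Lemma uv_entry (n : nat) (i : 'I_n * 'I_n * 'I_4) a :
  uv i a 0 = (a == i.1.1)%:R + om i.2 * (a == i.1.2)%:R.
Proof. by rewrite !mxE eqxx !andbT. Qed.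

Lemma outer_entry (n : nat) (x y : 'cV[CC]_n) a b :
  (x *m adjmx y) a b = x a 0 * Num.conj (y b 0).
Proof. by rewrite mxE big_ord1 !mxE. Qed.

Lemma conjD' (x y : CC) : Num.conj (x + y) = Num.conj x + Num.conj y.
Proof. exact: rmorphD. Qed.
Lemma conjM' (x y : CC) : Num.conj (x * y) = Num.conj x * Num.conj y.
Proof. exact: rmorphM. Qed.
Lemma conjN' (x : CC) : Num.conj (- x) = - Num.conj x.
Proof. exact: rmorphN. Qed.
Lemma conjR (x : R) : Num.conj (x%:C%C : CC) = x%:C%C.
Proof. by apply/eqP; rewrite eq_complex /= oppr0 !eqxx. Qed.

Lemma triple_sum (n : nat) (F : 'I_n * 'I_n * 'I_4 -> CC) :
  \sum_(i : 'I_n * 'I_n * 'I_4) F i = \sum_p \sum_q \sum_k F ((p, q), k).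
Proof.
rewrite (pair_bigA _ (fun p q => \sum_k F ((p, q), k))) pair_bigA /=.
by apply: eq_bigr => -[[p q] k] _.
Qed.

Lemma sum_dl2 (n : nat) (a : 'I_n) (G : 'I_n -> 'I_4 -> CC) :
  \sum_p \sum_k (a == p)%:R * G p k = \sum_k G a k.
Proof.
rewrite -(sum_dl a (fun p => \sum_k G p k)); apply: eq_bigr => p _.
by rewrite mulr_sumr.
Qed.

Lemma sum3_dl (n : nat) (a : 'I_n) (G : 'I_n -> 'I_n -> 'I_4 -> CC) :
  \sum_p \sum_q \sum_k (a == p)%:R * G p q k = \sum_q \sum_k G a q k.
Proof.
rewrite -(sum_dl a (fun p => \sum_q \sum_k G p q k)); apply: eq_bigr => p _.
rewrite mulr_sumr; apply: eq_bigr => q _; by rewrite mulr_sumr.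
Qed.

Lemma sum3_dq (n : nat) (a : 'I_n) (G : 'I_n -> 'I_n -> 'I_4 -> CC) :
  \sum_p \sum_q \sum_k (a == q)%:R * G p q k = \sum_p \sum_k G p a k.
Proof. by apply: eq_bigr => p _; rewrite sum_dl2. Qed.

Lemma sum2_const (n : nat) (c : CC) (G : 'I_n -> 'I_4 -> CC) :
  \sum_q \sum_k c * G q k = c * \sum_q \sum_k G q k.
Proof. rewrite mulr_sumr; apply: eq_bigr => q _; by rewrite mulr_sumr. Qed.

Lemma frame_entry (n : nat) (W : 'I_n -> 'I_n -> 'I_4 -> CC) a b :
  (\sum_(i : 'I_n * 'I_n * 'I_4) W i.1.1 i.1.2 i.2 *: (uv i *m adjmx (uv i))) a b =
  (a == b)%:R * (\sum_q \sum_k W a q k + \sum_p \sum_k W p a k)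
  + \sum_k (W a b k * Num.conj (om k) + W b a k * om k).
Proof.
rewrite summxE.
have E : forall i : 'I_n * 'I_n * 'I_4,
  (W i.1.1 i.1.2 i.2 *: (uv i *m adjmx (uv i))) a b =
  (a == i.1.1)%:R * ((b == i.1.1)%:R * W i.1.1 i.1.2 i.2)
  + (a == i.1.1)%:R * ((b == i.1.2)%:R * (W i.1.1 i.1.2 i.2 * Num.conj (om i.2)))
  + (a == i.1.2)%:R * ((b == i.1.1)%:R * (W i.1.1 i.1.2 i.2 * om i.2))
  + (a == i.1.2)%:R * ((b == i.1.2)%:R * W i.1.1 i.1.2 i.2).
  move=> i; rewrite mxE outer_entry !uv_entry conjD' conjM' !conj_nat.
  rewrite -[X in _ = _ + X]mulr1 -(om_conj i.2).
  ring.
rewrite (eq_bigr _ (fun i _ => E i)) !big_split /= !triple_sum.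
rewrite !sum3_dl !sum3_dq /= !sum_dl2 !sum2_const [b == a]eq_sym.
ring.
Qed.

Definition o0 : 'I_4 := @Ordinal 4 0 isT.
Definition o1 : 'I_4 := @Ordinal 4 1 isT.
Definition o2 : 'I_4 := @Ordinal 4 2 isT.
Definition o3 : 'I_4 := @Ordinal 4 3 isT.

Lemma sum4 (V : zmodType) (F : 'I_4 -> V) :
  \sum_(k < 4) F k = F o0 + F o1 + F o2 + F o3.
Proof.
rewrite !big_ord_recl big_ord0 addr0 !addrA.
by congr (_ + _ + _ + _); congr F; apply: val_inj.
Qed.

Lemma om0 : om o0 = 1. Proof. by rewrite /om expr0. Qed.
Lemma om1 : om o1 = iC. Proof. by rewrite /om expr1. Qed.
Lemma om2 : om o2 = -1. Proof. by rewrite /om expr2 iC2. Qed.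
Lemma om3 : om o3 = - iC. Proof. by rewrite /om exprS expr2 iC2 mulrN1. Qed.
Lemma com0 : Num.conj (om o0) = 1. Proof. by rewrite om0 conjC1. Qed.
Lemma com1 : Num.conj (om o1) = - iC. Proof. by rewrite om1 conj_iC. Qed.
Lemma com2 : Num.conj (om o2) = -1. Proof. by rewrite om2 conjCN1. Qed.
Lemma com3 : Num.conj (om o3) = iC. Proof. by rewrite om3 conj_miC. Qed.

Lemma adjmx_mul (p q r : nat) (A : 'M[CC]_(p, q)) (B : 'M[CC]_(q, r)) :
  adjmx (A *m B) = adjmx B *m adjmx A.
Proof. by rewrite /adjmx map_mxM trmx_mul. Qed.

Lemma adjmxK (p q : nat) (A : 'M[CC]_(p, q)) : adjmx (adjmx A) = A.
Proof. by apply/matrixP => i j; rewrite !mxE conjCK. Qed.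

Lemma adjmxZ (p q : nat) (c : CC) (A : 'M[CC]_(p, q)) :
  adjmx (c *: A) = Num.conj c *: adjmx A.
Proof. by apply/matrixP => i j; rewrite !mxE conjM'. Qed.

Lemma adjmxD (p q : nat) (A B : 'M[CC]_(p, q)) :
  adjmx (A + B) = adjmx A + adjmx B.
Proof. by apply/matrixP => i j; rewrite !mxE conjD'. Qed.

Lemma adj_ev (n : nat) (a : 'I_n) : adjmx (ev a) = delta_mx 0 a.
Proof. by apply/matrixP => i j; rewrite !mxE conj_nat andbC. Qed.

Lemma ev_ev (n : nat) (a b : 'I_n) : adjmx (ev a) *m ev b = (a == b)%:R%:M.
Proof.
rewrite adj_ev /ev mul_delta_mx_cond; apply/matrixP => i j.
by rewrite !ord1; case: (a == b); rewrite !mxE.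
Qed.

Lemma quad_ev (n : nat) (M : 'M[CC]_n) a b :
  (adjmx (ev a) *m M *m ev b) 0 0 = M a b.
Proof. by rewrite adj_ev /ev -rowE -colE !mxE. Qed.

Lemma sum_outer_ev (n : nat) : \sum_(l < n) ev l *m adjmx (ev l) = 1%:M :> 'M[CC]_n.
Proof.
apply/matrixP => a b; rewrite summxE !mxE.
under eq_bigr => l _ do rewrite outer_entry !mxE conj_nat !andbT.
rewrite (bigD1 a) //= eqxx mul1r big1 ?addr0 1?eq_sym //.
by move=> l /negbTE; rewrite eq_sym => ->; rewrite mul0r.
Qed.

Lemma outer_scale (n : nat) (w : R) (x : 'cV[CC]_n) : 0 <= w ->
  ((Num.sqrt w)%:C%C *: x) *m adjmx ((Num.sqrt w)%:C%C *: x) = w%:C%C *: (x *m adjmx x).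
Proof.
move=> w0; rewrite adjmxZ -scalemxAl -scalemxAr scalerA conjR.
by rewrite -rmorphM -expr2 sqr_sqrtr.
Qed.


Definition mmv (n : nat) (s : 'I_n -> 'I_n -> R) p q : R := ((s p p + s q q) / 2)%R.
Definition cf (k : 'I_4) (x y : R) : R :=
  (if val k == 0%N then x / 2 else if val k == 1%N then y / 2
  else if val k == 2%N then - (x / 2) else - (y / 2))%R.
Arguments cf k x%_ring_scope y%_ring_scope.
Definition beta (n : nat) (s : 'I_n -> 'I_n -> R) p q k : R :=
  (if p == q then (if val k == 0%N then s p p / 4 else 0)
  else if (p < q)%N then cf k (s p q - mmv s p q) (s q p - mmv s p q) else 0)%R.

Lemma sumR_dl (n : nat) (a : 'I_n) (G : 'I_n -> R) :
  \sum_p (a == p)%:R * G p = G a.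
Proof.
rewrite (bigD1 a) //= eqxx mul1r big1 ?addr0 // => p /negbTE.
by rewrite eq_sym => ->; rewrite mul0r.
Qed.

Section BetaVals.
Variables (n : nat) (s : 'I_n -> 'I_n -> R).
Lemma beta_d0 (p : 'I_n) : beta s p p o0 = s p p / 4. Proof. by rewrite /beta eqxx. Qed.
Lemma beta_d1 (p : 'I_n) : beta s p p o1 = 0. Proof. by rewrite /beta eqxx. Qed.
Lemma beta_d2 (p : 'I_n) : beta s p p o2 = 0. Proof. by rewrite /beta eqxx. Qed.
Lemma beta_d3 (p : 'I_n) : beta s p p o3 = 0. Proof. by rewrite /beta eqxx. Qed.
Lemma beta_gt (p q : 'I_n) k : (q < p)%N -> beta s p q k = 0.
Proof.
move=> h; rewrite /beta; have -> : (p == q) = false.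
  by apply/negbTE; apply/eqP => e; rewrite e ltnn in h.
by rewrite ltnNge (ltnW h).
Qed.
Lemma beta_lt (p q : 'I_n) k : (p < q)%N ->
  beta s p q k = cf k (s p q - mmv s p q) (s q p - mmv s p q).
Proof.
move=> h; rewrite /beta h; have -> // : (p == q) = false.
by apply/negbTE; apply/eqP => e; rewrite e ltnn in h.
Qed.
End BetaVals.
Lemma cf0 x y : cf o0 x y = x / 2. Proof. by []. Qed.
Lemma cf1 x y : cf o1 x y = y / 2. Proof. by []. Qed.
Lemma cf2 x y : cf o2 x y = - (x / 2). Proof. by []. Qed.
Lemma cf3 x y : cf o3 x y = - (y / 2). Proof. by []. Qed.

Lemma sumR_dr (n : nat) (a : 'I_n) (G : 'I_n -> R) :
  \sum_p (p == a)%:R * G p = G a.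
Proof.
rewrite (bigD1 a) //= eqxx mul1r big1 ?addr0 // => p /negbTE -> ; by rewrite mul0r.
Qed.

Lemma sumk_beta (n : nat) s (p q : 'I_n) :
  \sum_k beta s p q k = (p == q)%:R * (s p p / 4).
Proof.
rewrite sum4; case: (p =P q) => [->|ne].
  by rewrite mul1r beta_d0 beta_d1 beta_d2 beta_d3 !addr0.
rewrite (_ : (false%:R : R) = 0) // mul0r; case: (ltngtP p q) => h.
- rewrite !beta_lt // cf0 cf1 cf2 cf3; ring.
- by rewrite !beta_gt // !addr0.
- by move/val_inj: h.
Qed.

Lemma sumD (V : zmodType) (I : finType) (F G : I -> V) :
  \sum_i (F i + G i) = \sum_i F i + \sum_i G i.
Proof. exact: big_split. Qed.

Lemma sum_WA_row (n : nat) s (dl : R) (a : 'I_n) :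
  \sum_q \sum_k (dl * (1 + beta s a q k)) = dl * (4 * n%:R + s a a / 4).
Proof.
under eq_bigr => q _ do rewrite -mulr_sumr sumD sumk_beta sumr_const card_ord.
rewrite -mulr_sumr sumD sumR_dl sumr_const card_ord.
by rewrite mulr_natr.
Qed.


Lemma sum_WA_col (n : nat) s (dl : R) (a : 'I_n) :
  \sum_p \sum_k (dl * (1 + beta s p a k)) = dl * (4 * n%:R + s a a / 4).
Proof.
under eq_bigr => p _ do rewrite -mulr_sumr sumD sumk_beta sumr_const card_ord.
rewrite -mulr_sumr sumD.
by rewrite sumR_dr sumr_const card_ord mulr_natr.
Qed.

Local Open Scope ring_scope.

Lemma sumC2 (n : nat) (F : 'I_n -> 'I_4 -> R) :
  \sum_q \sum_k (F q k)%:C%C = (\sum_q \sum_k F q k)%:C%C :> CC.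
Proof. rewrite rmorph_sum; apply: eq_bigr => q _; by rewrite rmorph_sum. Qed.

Definition WA (n : nat) (s : 'I_n -> 'I_n -> R) (dl : R) p q k : R := (dl * (1 + beta s p q k))%R.
Arguments WA n s dl%_ring_scope p q k.

Definition MA (n : nat) s dl : 'M[CC]_n :=
  \sum_(i : 'I_n * 'I_n * 'I_4) (WA s dl i.1.1 i.1.2 i.2)%:C%C *: (uv i *m adjmx (uv i)).

Ltac csolve := rewrite /iC; apply/eqP; rewrite eq_complex /=; apply/andP; split; apply/eqP; match goal with |- ?x = ?y => change (x = y :> R) end.

Lemma MA_diag (n : nat) s dl (a : 'I_n) :
  MA s dl a a = (dl * (8 * n%:R + s a a))%:C%C.
Proof.
rewrite /MA (frame_entry (fun p q k => (WA s dl p q k)%:C%C)) eqxx mul1r !sumC2.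
rewrite /WA sum_WA_row sum_WA_col sum4 beta_d0 beta_d1 beta_d2 beta_d3.
rewrite com0 com1 com2 com3 om0 om1 om2 om3.
by csolve; field.
Qed.

Lemma MA_off (n : nat) s dl (a b : 'I_n) : (a < b)%N ->
  MA s dl a b = (dl * (s a b - mmv s a b))%:C%C - iC * (dl * (s b a - mmv s a b))%:C%C /\
  MA s dl b a = (dl * (s a b - mmv s a b))%:C%C + iC * (dl * (s b a - mmv s a b))%:C%C.
Proof.
move=> ab.
have nab : (a == b) = false by apply/negbTE; apply/eqP => e; rewrite e ltnn in ab.
have nba : (b == a) = false by rewrite eq_sym.
have f0 : (false%:R : CC) = 0 by [].
rewrite /MA !(frame_entry (fun p q k => (WA s dl p q k)%:C%C)) nab nba f0 !mul0r !add0r.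
rewrite !sum4 /WA !(fun k => @beta_lt _ s a b k ab) !(fun k => @beta_gt _ s b a k ab) cf0 cf1 cf2 cf3.
rewrite com0 com1 com2 com3 om0 om1 om2 om3.
by split; csolve; field.
Qed.

Lemma frame_const (n : nat) : (0 < n)%N ->
  \sum_(i : 'I_n * 'I_n * 'I_4) ((8 * n%:R)^-1)%:C%C *: (uv i *m adjmx (uv i)) = 1%:M :> 'M[CC]_n.
Proof.
move=> n0; apply/matrixP => a b.
rewrite (frame_entry (fun p q k => ((8 * n%:R)^-1)%:C%C)) !sumC2 !sumr_const !card_ord sum4.
rewrite com0 com1 com2 com3 om0 om1 om2 om3 mxE.
have nz : (n%:R : R) != 0 by rewrite pnatr_eq0 -lt0n.
have e : ((8 * n%:R)^-1 *+ 4 *+ n : R) = (8 * n%:R)^-1 * 4%:R * n%:R by rewrite !mulr_natr.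
rewrite e.
case: (a == b); rewrite ?mul1r ?mul0r.
- by rewrite (_ : (true%:R : CC) = 1) //; csolve; field.
- by rewrite (_ : (false%:R : CC) = 0) //; csolve; field.
Qed.

Local Open Scope ring_scope.

Definition rr : CC := (Num.sqrt (2^-1 : R))%:C%C.

Lemma rr_conj : Num.conj rr = rr.
Proof. exact: conjR. Qed.

Lemma rr2 : rr * rr = (2^-1 : R)%:C%C.
Proof. by rewrite /rr -rmorphM -expr2 sqr_sqrtr // invr_ge0 ler0n. Qed.

Lemma quad_evM (n : nat) (M : 'M[CC]_n) a b :
  adjmx (ev a) *m M *m ev b = (M a b)%:M.
Proof. by apply/matrixP => i j; rewrite !ord1 quad_ev mxE eqxx mulr1n. Qed.

Lemma quad_pair (n : nat) (M : 'M[CC]_n) (g : CC) a b :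
  (adjmx (rr *: (ev a + g *: ev b)) *m M *m (rr *: (ev a + g *: ev b))) 0 0 =
  (2^-1 : R)%:C%C * (M a a + g * M a b + Num.conj g * M b a + Num.conj g * g * M b b).
Proof.
rewrite !adjmxZ adjmxD adjmxZ rr_conj.
rewrite -!scalemxAl -scalemxAr !mulmxDl !mulmxDr -!scalemxAl -!scalemxAr.
rewrite !quad_evM !mxE eqxx !mulr1n -rr2; ring.
Qed.

Lemma tr_kraus_term (n : nat) (a0 c : 'I_n) (z : 'cV[CC]_n) (rho : 'M[CC]_n) :
  \tr ((ev a0 *m adjmx (ev a0)) *m ((ev c *m adjmx z) *m rho *m adjmx (ev c *m adjmx z)))
  = (a0 == c)%:R * \tr ((z *m adjmx z) *m rho).
Proof.
rewrite adjmx_mul adjmxK.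
have -> : ev a0 *m adjmx (ev a0) *m (ev c *m adjmx z *m rho *m (z *m adjmx (ev c)))
  = ev a0 *m (adjmx (ev a0) *m ev c) *m (adjmx z *m rho *m z) *m adjmx (ev c).
  by rewrite !mulmxA.
rewrite ev_ev mul_mx_scalar -!scalemxAl mxtraceZ.
case: eqP => [<-|_]; last by rewrite !mul0r.
rewrite mxtrace_mulC !mulmxA ev_ev eqxx mul_scalar_mx scale1r.
by rewrite (mxtrace_mulC (adjmx z *m rho) z) mulmxA.
Qed.

Local Open Scope ring_scope.

Lemma beta_bnd (n : nat) (s : 'I_n -> 'I_n -> R) p q k :
  (forall p q, -1 <= s p q <= 1) -> -1 <= beta s p q k <= 1.
Proof.
move=> hs; rewrite /beta.
have [h1 h2] := andP (hs p p); have [h3 h4] := andP (hs q q).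
have [h5 h6] := andP (hs p q); have [h7 h8] := andP (hs q p).
case: (p == q).
  by case: (val k == 0%N); apply/andP; split; lra.
case: (p < q)%N; last by apply/andP; split; lra.
rewrite /cf /mmv.
by case: (val k == 0%N); [|case: (val k == 1%N); [|case: (val k == 2%N)]];
  apply/andP; split; lra.
Qed.

Definition WR (n : nat) (s : 'I_n -> 'I_n -> R) (dl : R) p q k : R := (dl * (1 - beta s p q k))%R.
Arguments WR n s dl%_ring_scope p q k.

Definition MR (n : nat) s dl : 'M[CC]_n :=
  \sum_(i : 'I_n * 'I_n * 'I_4) (WR s dl i.1.1 i.1.2 i.2)%:C%C *: (uv i *m adjmx (uv i)).

Lemma MA_MR (n : nat) s : (0 < n)%N ->
  MA s (16 * n%:R)^-1 + MR s (16 * n%:R)^-1 = 1%:M :> 'M[CC]_n.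
Proof.
move=> n0; rewrite -(frame_const n0) /MA /MR -big_split /=.
apply: eq_bigr => i _; rewrite -scalerDl -rmorphD /WA /WR; congr (_%:C%C *: _).
have nz : (n%:R : R) != 0 by rewrite pnatr_eq0 -lt0n.
by field.
Qed.

Definition o1n (m : nat) : 'I_m.+2 := @Ordinal m.+2 1 isT.
Definition dlv (m : nat) : R := ((16 * (m.+2)%:R)^-1)%R.
Definition sT (m : nat) (T : {set 'I_m.+2 * 'I_m.+2}) (p q : 'I_m.+2) : R :=
  (if (p, q) \in T then 1 else -1)%R.

Definition zA (m : nat) T (i : 'I_m.+2 * 'I_m.+2 * 'I_4) : 'cV[CC]_m.+2 :=
  (Num.sqrt (WA (sT T) (dlv m) i.1.1 i.1.2 i.2))%:C%C *: uv i.
Definition zR (m : nat) T (i : 'I_m.+2 * 'I_m.+2 * 'I_4) : 'cV[CC]_m.+2 :=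
  (Num.sqrt (WR (sT T) (dlv m) i.1.1 i.1.2 i.2))%:C%C *: uv i.

Definition testKs (m : nat) T : seq 'M[CC]_m.+2 :=
  [seq ev 0 *m adjmx (zA T i) | i <- index_enum ('I_m.+2 * 'I_m.+2 * 'I_4)%type] ++
  [seq ev (o1n m) *m adjmx (zR T i) | i <- index_enum ('I_m.+2 * 'I_m.+2 * 'I_4)%type].

Definition psi (m : nat) (x : 'I_m.+2 * 'I_m.+2) : 'cV[CC]_m.+2 :=
  if x.1 == x.2 then ev x.1
  else if (x.1 < x.2)%N then rr *: (ev x.1 + 1 *: ev x.2)
  else rr *: (ev x.2 + iC *: ev x.1).

Definition prepKs (m : nat) x : seq 'M[CC]_m.+2 :=
  [seq psi x *m adjmx (ev l) | l <- index_enum 'I_m.+2].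

Definition E00 (m : nat) : 'M[CC]_m.+2 := ev 0 *m adjmx (ev 0).

Lemma sT_bnd m T : forall p q, -1 <= @sT m T p q <= 1.
Proof. by move=> p q; rewrite /sT; case: ((p, q) \in T); apply/andP; split; lra. Qed.

Lemma dlv_ge0 m : 0 <= dlv m.
Proof. by rewrite /dlv invr_ge0 mulr_ge0 // ler0n. Qed.

Lemma WA_ge0 m T p q k : 0 <= WA (@sT m T) (dlv m) p q k.
Proof.
rewrite /WA; apply: mulr_ge0; first exact: dlv_ge0.
have /andP [h1 h2] := beta_bnd p q k (@sT_bnd m T); lra.
Qed.

Lemma WR_ge0 m T p q k : 0 <= WR (@sT m T) (dlv m) p q k.
Proof.
rewrite /WR; apply: mulr_ge0; first exact: dlv_ge0.
have /andP [h1 h2] := beta_bnd p q k (@sT_bnd m T); lra.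
Qed.

Lemma kraus_term_TP (n : nat) (c : 'I_n) (z : 'cV[CC]_n) :
  adjmx (ev c *m adjmx z) *m (ev c *m adjmx z) = z *m adjmx z.
Proof.
rewrite adjmx_mul adjmxK -mulmxA (mulmxA (adjmx (ev c))) ev_ev eqxx.
by rewrite mul_scalar_mx scale1r.
Qed.

Lemma testKs_TP m T : kraus_TP (@testKs m T).
Proof.
rewrite /kraus_TP /testKs big_cat !big_map /=.
under eq_bigr => i _ do rewrite kraus_term_TP /zA outer_scale ?WA_ge0 //.
under [X in _ + X]eq_bigr => i _ do rewrite kraus_term_TP /zR outer_scale ?WR_ge0 //.
exact: (MA_MR (sT T) (isT : (0 < m.+2)%N)).
Qed.

Lemma pair_norm (n : nat) (g : CC) (a b : 'I_n) : a != b -> Num.conj g * g = 1 ->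
  adjmx (rr *: (ev a + g *: ev b)) *m (rr *: (ev a + g *: ev b)) = 1%:M.
Proof.
move=> ab gg; apply/matrixP => i j; rewrite !ord1.
rewrite -(mulmx1 (adjmx _)) quad_pair !mxE !eqxx (negbTE ab) eq_sym (negbTE ab) gg.
rewrite (_ : (true%:R : CC) = 1) // (_ : (false%:R : CC) = 0) //.
rewrite !mulr0 !addr0 mulr1 (_ : (1 : CC) + 1 = (2 : R)%:C%C); last first.
  by rewrite rmorphD rmorph1.
by rewrite -rmorphM mulVf // pnatr_eq0.
Qed.

Lemma psi_norm m x : adjmx (@psi m x) *m psi x = 1%:M.
Proof.
rewrite /psi; case: eqP => [e|ne].
  by rewrite ev_ev eqxx.
case: ltnP => h.
  apply: pair_norm; first by apply/eqP.
  by rewrite conjC1 mulr1.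
apply: pair_norm; first by apply/eqP => e; apply: ne; rewrite e.
by rewrite conj_iC mulNr iC2 opprK.
Qed.

Lemma prepKs_TP m x : kraus_TP (@prepKs m x).
Proof.
rewrite /kraus_TP /prepKs big_map /=.
under eq_bigr => l _ do rewrite adjmx_mul adjmxK -mulmxA (mulmxA (adjmx (psi x))) psi_norm mul1mx.
exact: sum_outer_ev.
Qed.

Lemma E00_herm m : Defs.hermitian (E00 m).
Proof. by rewrite /Defs.hermitian /E00 adjmx_mul adjmxK. Qed.

Lemma E00_idem m : E00 m *m E00 m = E00 m.
Proof.
by rewrite /E00 -mulmxA (mulmxA (adjmx (ev 0))) ev_ev eqxx mul_scalar_mx scale1r.
Qed.

Lemma E00_density m : density (E00 m).
Proof.
split; last first.
  by rewrite /E00 mxtrace_mulC ev_ev eqxx mxtrace_scalar.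
split; first exact: E00_herm.
move=> v; rewrite /E00 mulmxA -mulmxA.
have -> : adjmx (ev 0) *m v = adjmx (adjmx v *m ev 0) by rewrite adjmx_mul adjmxK.
by rewrite outer_entry mul_conjC_ge0.
Qed.

Definition Sig (m : nat) : finType := ('I_m.+2 * 'I_m.+2 + {set 'I_m.+2 * 'I_m.+2})%type.

Definition theQ (m : nat) : QFA (Sig m) m.+2 :=
  MkQFA (E00 m) (fun a : Sig m => match a with inl x => prepKs x | inr T => testKs T end) (E00 m).

Lemma theQ_ok m : is_1gQFA (theQ m).
Proof.
split; first exact: E00_density.
split; last by split; [exact: E00_herm | exact: E00_idem].
by case => [x|T] /=; [exact: prepKs_TP | exact: testKs_TP].
Qed.

Section G.
Variable C : numClosedFieldType.
Definition adj (m n : nat) (A : 'M[C]_(m, n)) : 'M[C]_(n, m) := (map_mx Num.conj A)^T.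
Definition evg (n : nat) (a : 'I_n) : 'cV[C]_n := delta_mx a 0.

Lemma adj_mul (p q r : nat) (A : 'M[C]_(p, q)) (B : 'M[C]_(q, r)) :
  adj (A *m B) = adj B *m adj A.
Proof. by rewrite /adj map_mxM trmx_mul. Qed.
Lemma adjK (p q : nat) (A : 'M[C]_(p, q)) : adj (adj A) = A.
Proof. by apply/matrixP => i j; rewrite !mxE conjCK. Qed.
Lemma adj_evg (n : nat) (a : 'I_n) : adj (evg a) = delta_mx 0 a.
Proof. by apply/matrixP => i j; rewrite !mxE rmorph_nat andbC. Qed.
Lemma evg_ev (n : nat) (a b : 'I_n) : adj (evg a) *m evg b = (a == b)%:R%:M.
Proof.
rewrite adj_evg /evg mul_delta_mx_cond; apply/matrixP => i j.
by rewrite !ord1; case: (a == b); rewrite !mxE.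
Qed.

Lemma trk (n : nat) (a0 c : 'I_n) (z : 'cV[C]_n) (rho : 'M[C]_n) :
  \tr ((evg a0 *m adj (evg a0)) *m ((evg c *m adj z) *m rho *m adj (evg c *m adj z)))
  = (a0 == c)%:R * \tr ((z *m adj z) *m rho).
Proof.
rewrite adj_mul adjK.
have -> : evg a0 *m adj (evg a0) *m (evg c *m adj z *m rho *m (z *m adj (evg c)))
  = evg a0 *m (adj (evg a0) *m evg c) *m (adj z *m rho *m z) *m adj (evg c).
  by rewrite !mulmxA.
rewrite evg_ev mul_mx_scalar -!scalemxAl mxtraceZ.
case: eqP => [<-|_]; last by rewrite !mul0r.
rewrite mxtrace_mulC !mulmxA evg_ev eqxx mul_scalar_mx scale1r.
by rewrite (mxtrace_mulC (adj z *m rho) z) mulmxA.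
Qed.

Lemma trg_sum (n : nat) (I : Type) (r : seq I) (F : I -> 'M[C]_n) :
  \tr (\sum_(i <- r) F i) = \sum_(i <- r) \tr (F i).
Proof. exact: raddf_sum. Qed.

Lemma tr_testg (n : nat) (I : finType) (a0 c1 : 'I_n) (zA zR : I -> 'cV[C]_n)
  (rho : 'M[C]_n) : a0 != c1 ->
  \tr ((evg a0 *m adj (evg a0)) *m \sum_(K <- [seq evg a0 *m adj (zA i) | i <- index_enum I]
        ++ [seq evg c1 *m adj (zR i) | i <- index_enum I]) (K *m rho *m adj K))
  = \tr ((\sum_i zA i *m adj (zA i)) *m rho).
Proof.
move=> ac.
rewrite big_cat !big_map mulmxDr mxtraceD !mulmx_sumr !trg_sum.
under eq_bigr => i _ do rewrite trk eqxx mul1r.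
under [X in _ + X]eq_bigr => i _ do rewrite trk (negbTE ac) mul0r.
by rewrite big1_eq addr0 -trg_sum -mulmx_suml.
Qed.
End G.

Local Open Scope ring_scope.

Lemma tr_sum (n : nat) (I : Type) (r : seq I) (F : I -> 'M[CC]_n) :
  \tr (\sum_(i <- r) F i) = \sum_(i <- r) \tr (F i).
Proof. exact: raddf_sum. Qed.

Lemma prep_apply m x : kraus_apply (@prepKs m x) (E00 m) = psi x *m adjmx (psi x).
Proof.
rewrite /kraus_apply /prepKs big_map /E00.
have t1 : (true%:R : CC) = 1 by [].
have f0 : (false%:R : CC) = 0 by [].
have E : forall l : 'I_m.+2,
  psi x *m adjmx (ev l) *m (ev 0 *m adjmx (ev 0)) *m adjmx (psi x *m adjmx (ev l))
  = (0 == l)%:R *: (psi x *m adjmx (psi x)).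
  move=> l; rewrite adjmx_mul adjmxK.
  rewrite !mulmxA -(mulmxA (psi x)) ev_ev mul_mx_scalar -!scalemxAl.
  rewrite -(mulmxA (psi x)) ev_ev mul_mx_scalar -!scalemxAl scalerA eq_sym.
  by case: (0 == l); rewrite ?t1 ?f0 ?mulr1 ?mulr0.
rewrite (eq_bigr _ (fun l _ => E l)).
rewrite (bigD1 0) //= big1 => [|l]; last first.
  by rewrite eq_sym => /negbTE ->; exact: scale0r.
by rewrite addr0 scale1r.
Qed.

Lemma sum_cat (n : nat) (I : Type) (r1 r2 : seq I) (F : I -> 'M[CC]_n) :
  \sum_(i <- r1 ++ r2) F i = \sum_(i <- r1) F i + \sum_(i <- r2) F i.
Proof. exact: big_cat. Qed.

Lemma sum_map (n : nat) (I J : Type) (r : seq I) (h : I -> J) (F : J -> 'M[CC]_n) :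
  \sum_(j <- map h r) F j = \sum_(i <- r) F (h i).
Proof. exact: big_map. Qed.

Lemma mxsum_l (n : nat) (A : 'M[CC]_n) (I : Type) (r : seq I) (F : I -> 'M[CC]_n) :
  A *m \sum_(i <- r) F i = \sum_(i <- r) A *m F i.
Proof. exact: mulmx_sumr. Qed.

Lemma tr_test (n : nat) (I : finType) (a0 c1 : 'I_n) (zA zR : I -> 'cV[CC]_n)
  (rho : 'M[CC]_n) : a0 != c1 ->
  \tr ((ev a0 *m adjmx (ev a0)) *m \sum_(K <- [seq ev a0 *m adjmx (zA i) | i <- index_enum I]
        ++ [seq ev c1 *m adjmx (zR i) | i <- index_enum I]) (K *m rho *m adjmx K))
  = \tr ((\sum_i zA i *m adjmx (zA i)) *m rho).
Proof. exact: (@tr_testg CC). Qed.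


Lemma accept_tr m x T :
  qfa_prob (theQ m) [:: inl x; inr T] =
  (adjmx (psi x) *m MA (@sT m T) (dlv m) *m psi x) 0 0.
Proof.
rewrite /qfa_prob /qfa_state /= prep_apply /kraus_apply /testKs /E00.
rewrite (tr_test (zA T) (zR T) _ (isT : (0 : 'I_m.+2) != o1n m)).
under eq_bigr => i _ do rewrite /zA outer_scale ?WA_ge0 //.
by rewrite -/(MA _ _) mulmxA mxtrace_mulC mulmxA trace_mx11.
Qed.

Ltac csolve2 := try rewrite /iC; apply/eqP; rewrite eq_complex /=; apply/andP; split; apply/eqP; match goal with |- ?x = ?y => change (x = y :> R) end.

Lemma accept_val m (x : 'I_m.+2 * 'I_m.+2) T :
  qfa_prob (theQ m) [:: inl x; inr T] = ((2^-1 + dlv m * sT T x.1 x.2)%R)%:C%C.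
Proof.
have nz : ((2 + m%:R)%R : R) != 0 by rewrite -natrD pnatr_eq0.
rewrite accept_tr /psi /dlv; case: eqP => [e|ne].
  rewrite quad_ev MA_diag e; apply: f_equal.
  by match goal with |- ?x = ?y => change (x = y :> R) end; field.
case: ltnP => h.
  rewrite quad_pair conjC1 !mul1r !MA_diag.
  have [-> ->] := MA_off (sT T) ((16 * (m.+2)%:R)^-1) h.
  by csolve2; rewrite /mmv; field.
have h' : (x.2 < x.1)%N.
  by rewrite ltn_neqAle h andbT; apply/eqP => e; apply: ne; apply: val_inj.
rewrite quad_pair conj_iC !MA_diag.
have [-> ->] := MA_off (sT T) ((16 * (m.+2)%:R)^-1) h'.
by csolve2; rewrite /mmv; field.
Qed.

Local Open Scope ring_scope.
Lemma vc_bound (k : nat) (X : finType) (v : X -> 'rV[R]_k) (d : {set X} -> 'cV[R]_k) :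
  (forall T x, (0 < (v x *m d T) 0 0) = (x \in T)) -> (#|X| <= k)%N.
Proof.
move=> H; rewrite leqNgt; apply/negP => ltk.
set N := #|X| in ltk *.
pose V : 'M[R]_(N, k) := \matrix_(i < N) v (enum_val i).
have rk : (0 < \rank (kermx V))%N.
  by rewrite mxrank_ker subn_gt0 (leq_ltn_trans (rank_leq_col V) ltk).
have nz : kermx V != 0 by rewrite -mxrank_eq0 -lt0n.
have [i ai] : exists i, row i (kermx V) != 0.
  case: (pickP (fun i => row i (kermx V) != 0)) => [i Hi|H0]; first by exists i.
  exfalso; move/eqP: nz; apply; apply/row_matrixP => i.
  by move/negbFE/eqP: (H0 i) ->; rewrite row0.
set a0 := row i (kermx V) in ai.
have a0V : a0 *m V = 0 by rewrite /a0 -row_mul mulmx_ker row0.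
have [j aj] : exists j, a0 0 j != 0.
  case: (pickP (fun j => a0 0 j != 0)) => [j Hj|H0]; first by exists j.
  exfalso; move/eqP: ai; apply; apply/rowP => j.
  by move/negbFE/eqP: (H0 j) ->; rewrite mxE.
have [a [aV [j' aj']]] : exists a : 'rV[R]_N, a *m V = 0 /\ exists j, 0 < a 0 j.
  have [pos|neg|z] := ltrgt0P (a0 0 j); last by rewrite z eqxx in aj.
  - by exists a0; split => //; exists j.
  - exists (- a0); split; first by rewrite mulNmx a0V oppr0.
    by exists j; rewrite mxE oppr_gt0.
pose T := [set x | 0 < a 0 (enum_rank x)].
have key : (a *m V *m d T) 0 0 = \sum_(l < N) a 0 l * (v (enum_val l) *m d T) 0 0.
  rewrite -mulmxA mxE; apply: eq_bigr => l _; congr (_ * _).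
  by rewrite !mxE; apply: eq_bigr => m _; rewrite mxE.
have : 0 < (a *m V *m d T) 0 0.
  rewrite key (bigD1 j') //=.
  have t1 : 0 < a 0 j' * (v (enum_val j') *m d T) 0 0.
    apply: mulr_gt0 => //; rewrite H inE enum_valK //.
  apply: ltr_wpDr t1 => //.
  apply: sumr_ge0 => l _.
  case: (ltrP 0 (a 0 l)) => al.
    by apply: mulr_ge0; [exact: ltW | apply: ltW; rewrite H inE enum_valK].
  apply: mulr_le0 => //.
  by rewrite leNgt H inE enum_valK -leNgt.
by rewrite aV mul0mx mxE ltxx.
Qed.

Lemma lang_val m (x : 'I_m.+2 * 'I_m.+2) T :
  qfa_lang (theQ m) (2%:R)^-1 [:: inl x; inr T] = (x \in T).
Proof.
rewrite /qfa_lang accept_val.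
have -> : ((2%:R)^-1 : CC) = ((2^-1 : R)%R)%:C%C by rewrite fmorphV rmorph_nat.
rewrite ltcR -subr_gt0 addrC addKr /sT.
case: x => a b /=.
have dp : 0 < dlv m by rewrite /dlv invr_gt0 mulr_gt0 // ltr0n.
case: ((a, b) \in T); rewrite ?mulr1 ?mulrN1 ?dp //.
by rewrite oppr_gt0 ltNge (ltW dp).
Qed.

Lemma row_sum1 (k : nat) (pi : 'rV[R]_k) (M : 'M[R]_k) :
  \sum_j pi 0 j = 1 -> (forall i, \sum_j M i j = 1) -> \sum_j (pi *m M) 0 j = 1.
Proof.
move=> hp hM.
under eq_bigr => j _ do rewrite mxE.
rewrite exchange_big /=.
rewrite -[RHS]hp; apply: eq_bigr => i _.
by rewrite -mulr_sumr hM mulr1.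
Qed.

Lemma mxsubE (p q : nat) (A B : 'M[R]_(p, q)) i j : (A - B) i j = (A i j - B i j)%R.
Proof. by rewrite !mxE. Qed.

Lemma shift_mu (k : nat) (v : 'rV[R]_k) (b : 'cV[R]_k) (mu : R) :
  \sum_j v 0 j = 1 -> (v *m (b - const_mx mu)) 0 0 = ((v *m b) 0 0 - mu)%R.
Proof.
move=> hv.
have hB : (v *m (const_mx mu : 'cV[R]_k)) 0 0 = mu.
  rewrite mxE; under eq_bigr => j _ do rewrite mxE.
  by rewrite -mulr_suml hv mul1r.
by rewrite mulmxBr mxsubE hB.
Qed.

Theorem theorem4p1 :
  forall n : nat, (2 <= n)%N ->
  exists (S : finType) (Q : QFA S n),
    is_1gQFA Q /\
    forall (k : nat) (P : PFA S k),
      is_PFA P ->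
      (exists mu : R, 0 <= mu < 1 /\
         forall w : seq S, pfa_lang P mu w = qfa_lang Q (2%:R)^-1 w) ->
      (n ^ 2 - 1 <= k)%N.
Proof.
case=> [|[|m]] // _.
exists (Sig m), (theQ m); split; first exact: theQ_ok.
move=> k P [[_ hpi] [htr _]] [mu [_ hl]].
pose v (x : 'I_m.+2 * 'I_m.+2) := pfa_init P *m pfa_trans P (inl x).
pose d (T : {set 'I_m.+2 * 'I_m.+2}) :=
  pfa_trans P (inr T) *m pfa_end P *m indicator_col (pfa_final P) - const_mx mu.
have key : forall T x, (0 < (v x *m d T) 0 0) = (x \in T).
  move=> T x.
  rewrite shift_mu; last by apply: row_sum1 => // i; have [_ ->] := htr (inl x).
  rewrite subr_gt0 -lang_val -hl /pfa_lang /pfa_prob /= /v !mulmxA.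
  by [].
have := vc_bound key.
rewrite card_prod card_ord => h.
apply: leq_trans h; exact: leq_subr.
Qed.
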